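(* Let $(V,E,c,p)$ be a PCSTP instance with $s:=|T_p|\ge 3$, let $H$ be a terminal-regions decomposition, and enumerate $T_p=\{t_1,\dots,t_s\}$ so that $r^{pc}_H(t_1)\le\dots\le r^{pc}_H(t_s)$. Let $v_i\in V\setminus T_p$. If there is an optimal solution $S$ in which $v_i$ has degree at least $3$, then $$C(S)\ \ge\ \underline{d}(v_i,\bar v_{i,1})+\underline{d}(v_i,\bar v_{i,2})+\underline{d}(v_i,\bar v_{i,3})+\sum_{k=1}^{s-3} r^{pc}_H(t_k).$$
   Context: A PCSTP instance $(V,E,c,p)$: finite undirected connected graph $G=(V,E)$, $c:E\to\mathbb{Q}_{>0}$, $p:V\to\mathbb{Q}_{\ge0}$. For a tree $S\subseteq G$ (connected acyclic subgraph with at least one vertex), $C(S):=\sum_{e\in E(S)}c(e)+\sum_{v\in V\setminus V(S)}p(v)$; an optimal solution is a tree minimizing $C$. $T_p:=\{v\in V:p(v)>0\}$. $d(u,w)$ is the shortest-path distance in $G$ w.r.t. $c$. $\underline{d}(u,w)$ is the shortest-path distance between $u$ and $w$ in the subgraph induced by $V\setminus(T_p\setminus\{u,w\})$ ($+\infty$ if none). For $v_i\in V\setminus T_p$, $\bar v_{i,1},\bar v_{i,2},\dots$ denote the potential terminals ordered by nondecreasing $\underline{d}(v_i,\cdot)$ (ties broken arbitrarily). A terminal-regions decomposition is a partition $H=\{H_t:t\in T_p\}$ of $V$ with $H_t\cap T_p=\{t\}$ and each $H_t$ inducing a connected subgraph. For $t\in T_p$, $r^{pc}_H(t):=\min\{p(t),\min\{d(t,v):v\notin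 H_t\}\}$. *)

(* Defs.v *)
From HB Require Import structures.
From mathcomp Require Import all_boot all_order all_algebra.
Set Implicit Arguments. Unset Strict Implicit. Unset Printing Implicit Defensive.
Import Order.TTheory GRing.Theory Num.Theory.
Local Open Scope ring_scope.

Section PCSTP.
Variable V : finType.

(* Edges of the (simple, undirected) graph are 2-element vertex sets. *)
Definition adj (E : {set {set V}}) : rel V := fun x y => [set x; y] \in E.

Definition is_pcstp (E : {set {set V}}) (c : {set V} -> rat) (p : V -> rat) : Prop :=
  [/\ (forall e, e \in E -> #|e| = 2%N),
      (forall e, e \in E -> 0 < c e),
      (forall v, 0 <= p v) &
      (forall u w, connect (adj E) u w)].

Definition Tp (p : V -> rat) : {set V} := [set v | 0 < p v].

(* extended nonnegative values: None = +infinity *)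
Definition eadd (x y : option rat) : option rat :=
  match x, y with Some a, Some b => Some (a + b) | _, _ => None end.
Definition ele (x y : option rat) : bool :=
  match x, y with
  | _, None => true
  | None, Some _ => false
  | Some a, Some b => a <= b
  end.
Definition emin (x y : option rat) : option rat :=
  match x, y with
  | None, _ => y
  | _, None => x
  | Some a, Some b => Some (Num.min a b)
  end.

Definition wcost (c : {set V} -> rat) (x : V) (s : seq V) : rat :=
  \sum_(e <- zip (x :: s) s) c [set e.1; e.2].

Definition is_path (E : {set {set V}}) (A : {set V}) (u : V) (t : seq V) (w : V) : bool :=
  [&& u \in A, all (fun x => x \in A) t, path (adj E) u t, last u t == w & uniq (u :: t)].

Definition dist_in (E : {set {set V}}) (c : {set V} -> rat) (A : {set V}) (u w : V)
  : option rat :=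
  \big[emin/None]_(k < #|V|)
     \big[emin/None]_(t : k.-tuple V | is_path E A u t w) Some (wcost c u t).

Definition dG E c (u w : V) : option rat := dist_in E c [set: V] u w.

(* underline d(u,w): distance in the subgraph induced by V \ (T_p \ {u,w}) *)
Definition dlow E c p (u w : V) : option rat :=
  dist_in E c [set x | (x \notin Tp p) || (x == u) || (x == w)] u w.

Definition is_trd (E : {set {set V}}) (p : V -> rat) (H : V -> {set V}) : Prop :=
  [/\ (forall v, exists t, [/\ t \in Tp p, v \in H t &
                     forall t', t' \in Tp p -> v \in H t' -> t' = t]),
      (forall t, t \in Tp p -> H t :&: Tp p = [set t]) &
      (forall t, t \in Tp p -> forall u w, u \in H t -> w \in H t ->
          connect (fun x y => [&& adj E x y, x \in H t & y \in H t]) u w)].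

Definition rpc E c p (H : V -> {set V}) (t : V) : rat :=
  match emin (Some (p t)) (\big[emin/None]_(v | v \notin H t) dG E c t v) with
  | Some x => x
  | None => p t
  end.

Definition has_cycle (ES : {set {set V}}) : Prop :=
  exists x (s : seq V), [/\ (2 <= size s)%N, uniq (x :: s), path (adj ES) x s &
                            [set last x s; x] \in ES].

Definition is_tree (E : {set {set V}}) (VS : {set V}) (ES : {set {set V}}) : Prop :=
  [/\ ES \subset E, (forall e, e \in ES -> e \subset VS), VS != set0,
      (forall u w, u \in VS -> w \in VS -> connect (adj ES) u w) &
      ~ has_cycle ES].

Definition Cost (c : {set V} -> rat) (p : V -> rat) (VS : {set V}) (ES : {set {set V}}) : rat :=
  \sum_(e in ES) c e + \sum_(v in ~: VS) p v.

Definition optimal E c p VS ES : Prop :=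
  is_tree E VS ES /\
  forall VS' ES', is_tree E VS' ES' -> Cost c p VS ES <= Cost c p VS' ES'.

Definition deg (ES : {set {set V}}) (v : V) : nat := #|[set e in ES | v \in e]|.

Definition enumerates (T : {set V}) (ts : seq V) : Prop := uniq ts /\ ts =i T.

End PCSTP.

(* Main.v *)
Require Import Defs.
From HB Require Import structures.
From mathcomp Require Import all_boot all_order all_algebra zify ring lra.
From Stdlib Require Import Lia.
Import Order.TTheory GRing.Theory Num.Theory.
Local Open Scope ring_scope.

Module Helpers.
Set Implicit Arguments. Unset Strict Implicit. Unset Printing Implicit Defensive.

Lemma sorted_take_le (T : eqType) (f : T -> rat) (s A : seq T) :
  sorted (fun x y => f x <= f y) s -> uniq A -> {subset A <= s} ->
  \sum_(x <- take (size A) s) f x <= \sum_(x <- A) f x.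
Proof.
elim: s A => [|x s IH] A /= Hs HA HAs.
  case: A HA HAs => [|a A] //= _ HAs; by have := HAs a (mem_head _ _).
have Hs' := path_sorted Hs.
have Hmin : all (fun y => f x <= f y) s.
  by apply: (order_path_min _ Hs) => a b d /le_trans; apply.
case: (boolP (x \in A)) => xA.
  rewrite (perm_big _ (perm_to_rem xA)) big_cons.
  case: A xA HA HAs => [|a A] //= xA HA HAs.
  rewrite big_cons lerD2l.
  have -> : size A = size (rem x (a :: A)) by rewrite size_rem.
  apply: IH => //; first by rewrite rem_uniq.
  move=> y yr; have yA : y \in a :: A by apply: (mem_rem yr).
  have := HAs y yA; rewrite inE => /orP[/eqP yx|//].
  by move: yr; rewrite yx mem_rem_uniqF.
case: A xA HA HAs => [|a A] xA HA HAs; first by rewrite take0 !big_nil.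
rewrite /= big_cons big_cons.
have aA : a \notin A by case/andP: HA.
have HAs' : {subset a :: A <= s}.
  move=> y yA; have := HAs y yA; rewrite inE => /orP[/eqP yx|//].
  by move: xA; rewrite -yx yA.
apply: lerD; first by apply: (allP Hmin); apply: HAs'; exact: mem_head.
apply: IH => //; first by case/andP: HA.
by move=> y yA; apply: HAs'; rewrite inE yA orbT.
Qed.

Lemma ele_trans a b d : ele a b -> ele b d -> ele a d.
Proof. by case: a; case: b; case: d => //= x y z; apply: le_trans. Qed.

Lemma ele_refl a : ele a a.
Proof. by case: a => //= x; rewrite lexx. Qed.

Lemma ele_eminl a b : ele (emin a b) a.
Proof. by case: a; case: b => //= x y; rewrite ?ge_min ?lexx ?orbT. Qed.

Lemma ele_eminr a b : ele (emin a b) b.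
Proof. by case: a; case: b => //= x y; rewrite ?ge_min ?lexx ?orbT. Qed.

Lemma big_emin_seq_le (I : eqType) (r : seq I) (P : pred I) F i0 :
  i0 \in r -> P i0 -> ele (\big[emin/None]_(i <- r | P i) F i) (F i0).
Proof.
elim: r => [|i r IH] //=; rewrite inE big_cons => /orP[/eqP <-|ir] Pi0.
  by rewrite Pi0 ele_eminl.
case: (P i); last exact: IH.
exact: ele_trans (ele_eminr _ _) (IH ir Pi0).
Qed.

Lemma big_emin_le (I : finType) (P : pred I) F i0 :
  P i0 -> ele (\big[emin/None]_(i | P i) F i) (F i0).
Proof. by move=> Pi0; apply: big_emin_seq_le => //; rewrite mem_index_enum. Qed.

Section Dist.
Variable V : finType.
Implicit Types (E : {set {set V}}) (c : {set V} -> rat).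

Lemma dist_le E c A u s w : is_path E A u s w -> (size s < #|V|)%N ->
  ele (dist_in E c A u w) (Some (wcost c u s)).
Proof.
move=> Hp Hsz; rewrite /dist_in.
apply: ele_trans (big_emin_le _ (i0 := Ordinal Hsz) _) _ => //=.
exact: (big_emin_le _ (i0 := in_tuple s)).
Qed.

Lemma wcost_ge0 E c u s : (forall e, e \in E -> 0 < c e) -> path (adj E) u s ->
  0 <= wcost c u s.
Proof.
move=> Hc; elim: s u => [|x s IH] u /=; first by rewrite /wcost big_nil.
case/andP=> Hux Hp; rewrite /wcost /= big_cons.
by apply: addr_ge0; [apply: ltW; apply: Hc | apply: IH].
Qed.

Definition onn (o : option rat) := if o is Some a then 0 <= a else true.

Lemma dist_ge0 E c A u w : (forall e, e \in E -> 0 < c e) -> onn (dist_in E c A u w).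
Proof.
move=> Hc; rewrite /dist_in.
have Hop : forall a b, onn a -> onn b -> onn (emin a b).
  by case=> [a|] [b|] //= Ha Hb; rewrite le_min Ha Hb.
apply: (big_ind onn) => // k _; apply: (big_ind onn) => //.
move=> t; rewrite /is_path => /and5P[_ _ Hp _ _] /=.
exact: (@wcost_ge0 E c u t Hc Hp).
Qed.

Lemma wcost_fun c (w : nat -> V) n k :
  wcost c (w n) [seq w i | i <- iota n.+1 k] = \sum_(i < k) c [set w (n + i)%N; w (n + i).+1].
Proof.
elim: k n => [|k IH] n; first by rewrite /wcost big_ord0 big_nil.
rewrite /= /wcost /= big_cons big_ord_recl /= addn0.
congr (_ + _); rewrite -/(wcost c (w n.+1) _) IH.
by apply: eq_bigr => i _; rewrite addSnnS.
Qed.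

Lemma path_fun (e : rel V) (w : nat -> V) m n :
  (forall k, (k < n)%N -> e (w (m + k)%N) (w (m + k).+1)) ->
  path e (w m) [seq w k | k <- iota m.+1 n].
Proof.
elim: n m => [|n IH] m H //=.
have := H 0%N isT; rewrite addn0 => ->; apply: IH => k Hk.
by rewrite addSnnS; apply: H.
Qed.

Lemma last_iota m n : last m (iota m.+1 n) = (m + n)%N.
Proof. by elim: n m => [|n IH] m /=; rewrite ?addn0 // IH addSnnS. Qed.

Lemma last_fun (w : nat -> V) m n :
  last (w m) [seq w k | k <- iota m.+1 n] = w (m + n)%N.
Proof. by rewrite last_map last_iota. Qed.
End Dist.

Lemma sum_sub (I : finType) (A B : {set I}) (F : I -> rat) :
  A \subset B -> (forall x, x \in B -> 0 <= F x) ->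
  \sum_(x in A) F x <= \sum_(x in B) F x.
Proof.
move=> AB H; rewrite [X in _ <= X](big_setID A) /= (setIidPr AB) ler_wpDr //.
by apply: sumr_ge0 => x; rewrite inE => /andP[_]; apply: H.
Qed.

Lemma set2_eq (T : finType) (a b z w : T) : [set a; b] = [set z; w] ->
  (a = z /\ b = w) \/ (a = w /\ b = z).
Proof.
move=> H.
have Ha : a \in [set z; w] by rewrite -H set21.
have Hb : b \in [set z; w] by rewrite -H set22.
have Hz : z \in [set a; b] by rewrite H set21.
have Hw : w \in [set a; b] by rewrite H set22.
move: Ha Hb Hz Hw; rewrite !inE => /orP[]/eqP-> /orP[]/eqP->; try by [left|right].
  by move=> _ /orP[]/eqP->; left.
by move=> /orP[]/eqP-> _; right.
Qed.

Lemma seq_max (T : eqType) (f : T -> nat) (s : seq T) x0 : x0 \in s ->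
  exists2 z, z \in s & forall y, y \in s -> (f y <= f z)%N.
Proof.
case: s => [//|a s] _; elim: s a => [|b s IH] a.
  by exists a; rewrite ?mem_head // => y; rewrite inE => /eqP->.
have [z zs Hz] := IH b.
case: (leqP (f a) (f z)) => H.
  by exists z; [rewrite inE zs orbT | move=> y; rewrite inE => /orP[/eqP->|/Hz]].
exists a; rewrite ?mem_head // => y; rewrite inE => /orP[/eqP->//|/Hz].
by move=> H1; apply: leq_trans H1 (ltnW H).
Qed.

Lemma sub_card (T : finType) (A : {set T}) n : (n <= #|A|)%N ->
  exists B : {set T}, B \subset A /\ #|B| = n.
Proof.
move=> Hn; exists [set x in take n (enum A)]; split.
  by apply/subsetP => x; rewrite inE => /mem_take; rewrite mem_enum.
rewrite cardsE (card_uniqP _) ?size_takel //; first by rewrite -cardE.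
by apply: take_uniq; apply: enum_uniq.
Qed.

Lemma arith1 (da db ma mb x z : nat) : (da - ma <= db - mb)%N -> (mb <= db)%N -> (x <= da)%N ->
  (da - x)%N = (db - z)%N -> (ma < x)%N -> (z <= mb)%N -> False.
Proof. lia. Qed.

Lemma arith2 (d i : nat) : (i < d)%N -> (d - (d - i.+1).+1)%N = i.
Proof. lia. Qed.

Lemma arith3 (d i : nat) : (i < d)%N -> (d - i.+1 < d)%N.
Proof. lia. Qed.

Section Tree.
Variable V : finType.
Variables (E ES : {set {set V}}) (VS : {set V}) (vi : V).
Hypothesis HE2 : forall e, e \in E -> #|e| = 2%N.
Hypothesis HES : ES \subset E.
Hypothesis HESV : forall e, e \in ES -> e \subset VS.
Hypothesis Hconn : forall u w, u \in VS -> w \in VS -> connect (adj ES) u w.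
Hypothesis Hvi : vi \in VS.

Lemma adjC x y : adj ES x y = adj ES y x.
Proof. by rewrite /adj setUC. Qed.

Lemma adj_VS x y : adj ES x y -> (x \in VS) && (y \in VS).
Proof.
move=> H; have /subsetP S := HESV H.
by rewrite !S // !inE eqxx ?orbT.
Qed.

Lemma adj_neq x y : adj ES x y -> x != y.
Proof.
move=> H; apply/eqP => exy; subst y.
have := HE2 (subsetP HES _ H); by rewrite setUid cards1.
Qed.

Definition Pn n x := [exists t : n.-tuple V, path (adj ES) vi t && (last vi t == x)].

Lemma PnP n x : reflect (exists s, [/\ size s = n, path (adj ES) vi s & last vi s = x]) (Pn n x).
Proof.
apply: (iffP existsP) => [[t /andP[Hp /eqP Hl]]|[s [Hs Hp Hl]]].
  by exists t; rewrite size_tuple.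
have Hs' : size s == n by rewrite Hs.
by exists (Tuple Hs') => /=; rewrite Hp Hl eqxx.
Qed.

Lemma Pn0 x : Pn 0 x = (x == vi).
Proof.
apply/PnP/eqP => [[s [Hs _ Hl]]|->]; last by exists [::].
by case: s Hs Hl => //.
Qed.

Lemma Pn_step n y z : Pn n y -> adj ES y z -> Pn n.+1 z.
Proof.
move=> /PnP[s [Hs Hp Hl]] Hyz; apply/PnP; exists (rcons s z).
by rewrite size_rcons Hs rcons_path Hp Hl Hyz last_rcons.
Qed.

Lemma Pn_back n z : Pn n.+1 z -> exists y, Pn n y /\ adj ES y z.
Proof.
move=> /PnP[s [Hs Hp Hl]]; case/lastP: s Hs Hp Hl => [|s a] //.
rewrite size_rcons rcons_path last_rcons => -[Hs] /andP[Hp Ha] Hl.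
exists (last vi s); split; last by rewrite -Hl.
by apply/PnP; exists s.
Qed.

Definition depth x := find (Pn ^~ x) (iota 0 #|V|).

Lemma Pn_ex x : x \in VS -> has (Pn ^~ x) (iota 0 #|V|).
Proof.
move=> Hx; have /connectP[s Hp Hl] := Hconn Hvi Hx.
case/shortenP: Hp Hl => s' Hp' Hu _ Hl.
apply/hasP; exists (size s').
  rewrite mem_iota /= add0n.
  have := max_card (mem (vi :: s')); rewrite (card_uniqP Hu) /=; done.
by apply/PnP; exists s'.
Qed.

Lemma depth_spec x : x \in VS -> (depth x < #|V|)%N /\ Pn (depth x) x.
Proof.
move=> Hx; have H := Pn_ex Hx; split; first by rewrite has_find size_iota in H.
have := nth_find 0 H; rewrite -/(depth x) nth_iota ?add0n //.
by rewrite has_find size_iota in H.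
Qed.

Lemma depth_min x n : (n < depth x)%N -> ~~ Pn n x.
Proof.
move=> Hn; have Hs : (n < size (iota 0 #|V|))%N.
  by apply: leq_trans Hn _; apply: find_size.
rewrite size_iota in Hs.
by have := before_find 0 Hn; rewrite nth_iota // add0n => ->.
Qed.

Lemma depth_vi : depth vi = 0%N.
Proof.
case: (posnP (depth vi)) => // H; have := depth_min H; by rewrite Pn0 eqxx.
Qed.

Lemma depth0 x : x \in VS -> depth x = 0%N -> x = vi.
Proof. by move=> Hx H0; have [_] := depth_spec Hx; rewrite H0 Pn0 => /eqP. Qed.

Lemma depth_adj y z : adj ES y z -> (depth z <= (depth y).+1)%N.
Proof.
move=> Hyz; have /andP[Hy _] := adj_VS Hyz.
have [_ Py] := depth_spec Hy; have Pz := Pn_step Py Hyz.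
rewrite leqNgt; apply/negP => H; by have := depth_min H; rewrite Pz.
Qed.

Lemma depth_par_ex x : x \in VS -> x != vi ->
  exists y, adj ES y x /\ depth y = (depth x).-1.
Proof.
move=> Hx Hxv; have [_ Px] := depth_spec Hx.
case Hd : (depth x) Px => [|d] Px; first by move: Hd => /(depth0 Hx) /eqP; rewrite (negbTE Hxv).
have [y [Py Hyx]] := Pn_back Px; exists y; split => //=.
have /andP[Hy _] := adj_VS Hyx.
have := depth_adj Hyx; rewrite Hd ltnS => H1.
apply/eqP; rewrite eqn_leq; apply/andP; split => //.
rewrite leqNgt; apply/negP => H; by have := depth_min H; rewrite Py.
Qed.

Definition par x := if [pick y | adj ES y x && (depth y == (depth x).-1)] is Some y then y else x.

Lemma par_spec x : x \in VS -> x != vi -> adj ES (par x) x /\ depth (par x) = (depth x).-1.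
Proof.
move=> Hx Hxv; rewrite /par; case: pickP => [y /andP[H1 /eqP H2] //|H].
have [y [H1 H2]] := depth_par_ex Hx Hxv.
by have := H y; rewrite H1 H2 eqxx.
Qed.

Lemma par_vi : par vi = vi.
Proof.
rewrite /par; case: pickP => [y /andP[H1 /eqP H2]|//].
have /andP[Hy _] := adj_VS H1.
rewrite depth_vi /= in H2; have := depth0 Hy H2 => Eyv; subst y.
by have := adj_neq H1; rewrite eqxx.
Qed.

Lemma par_VS x : x \in VS -> par x \in VS.
Proof.
move=> Hx; case: (eqVneq x vi) => [->|Hxv]; first by rewrite par_vi.
have [H _] := par_spec Hx Hxv; by case/andP: (adj_VS H).
Qed.

Lemma depth_par x : x \in VS -> depth (par x) = (depth x).-1.
Proof.
move=> Hx; case: (eqVneq x vi) => [->|Hxv]; first by rewrite par_vi depth_vi.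
by have [_ ->] := par_spec Hx Hxv.
Qed.

Definition it k x := iter k par x.

Lemma it_VS k x : x \in VS -> it k x \in VS.
Proof. by move=> Hx; elim: k => //= k IH; apply: par_VS. Qed.

Lemma depth_it k x : x \in VS -> depth (it k x) = (depth x - k)%N.
Proof.
move=> Hx; elim: k => [|k IH]; first by rewrite subn0.
by rewrite /it iterS -/(it k x) depth_par ?it_VS // IH subnS.
Qed.

Lemma it_depth x : x \in VS -> it (depth x) x = vi.
Proof. by move=> Hx; apply: depth0; rewrite ?it_VS ?depth_it ?subnn. Qed.

Lemma it_neq k x : x \in VS -> (k < depth x)%N -> it k x != vi.
Proof.
move=> Hx Hk; apply/eqP => H; have := depth_it k Hx; rewrite H depth_vi.
by move=> /eqP; rewrite eq_sym subn_eq0 leqNgt Hk.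
Qed.

Lemma it_inj i j x : x \in VS -> (i <= depth x)%N -> (j <= depth x)%N -> it i x = it j x -> i = j.
Proof.
move=> Hx Hi Hj H; have := congr1 depth H; rewrite !depth_it // => H2.
have := congr1 (fun n => depth x - n)%N H2; by rewrite !subKn.
Qed.

Lemma it_add i j x : it (i + j) x = it i (it j x).
Proof. by rewrite /it iterD. Qed.

Lemma itS k x : it k.+1 x = par (it k x).
Proof. by []. Qed.

Definition X := VS :\ vi.
Definition ed x := [set x; par x].

Lemma ed_ES x : x \in X -> ed x \in ES.
Proof.
rewrite !inE => /andP[Hxv Hx]; have [H _] := par_spec Hx Hxv.
by rewrite /ed setUC.
Qed.

Lemma ed_inj x y : x \in X -> y \in X -> ed x = ed y -> x = y.
Proof.
rewrite !inE => /andP[Hxv Hx] /andP[Hyv Hy] H.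
have := set21 x (par x); rewrite -/(ed x) H !inE => /orP[/eqP //|/eqP Hxy].
have := set21 y (par y); rewrite -/(ed y) -H !inE => /orP[/eqP //|/eqP Hyx].
have := depth_par Hx; have := depth_par Hy; rewrite -Hxy -Hyx => H1 H2.
have P1 : (0 < depth x)%N by rewrite lt0n; apply/eqP => /(depth0 Hx) /eqP; rewrite (negbTE Hxv).
have P2 : (0 < depth y)%N by rewrite lt0n; apply/eqP => /(depth0 Hy) /eqP; rewrite (negbTE Hyv).
move: H1 H2 P1 P2; lia.
Qed.

Lemma depth_pos x : x \in X -> (0 < depth x)%N.
Proof.
rewrite !inE => /andP[Hxv Hx]; rewrite lt0n; apply/eqP => /(depth0 Hx) /eqP.
by rewrite (negbTE Hxv).
Qed.

Lemma it_X k x : x \in VS -> (k < depth x)%N -> it k x \in X.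
Proof. by move=> Hx Hk; rewrite !inE it_neq ?it_VS. Qed.

Definition top x := it (depth x).-1 x.

Lemma top_spec x : x \in X -> [/\ top x \in X, par (top x) = vi & depth (top x) = 1%N].
Proof.
move=> HX; have Hx : x \in VS by move: HX; rewrite inE => /andP[].
have Hd := depth_pos HX.
have Hdt : depth (top x) = 1%N by rewrite /top depth_it //; lia.
split => //; first by apply: it_X => //; rewrite prednK.
by rewrite -itS prednK // it_depth.
Qed.

Lemma top_it x i : x \in VS -> (i < depth x)%N -> top (it i x) = top x.
Proof.
move=> Hx Hi; rewrite /top depth_it // -it_add; congr (it _ x); lia.
Qed.

Lemma adjC_gen (F : {set {set V}}) x y : adj F x y = adj F y x.
Proof. by rewrite /adj setUC. Qed.

Lemma depth_par_lt x : x \in X -> (depth (par x) < depth x)%N.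
Proof.
move=> HX; have Hd := depth_pos HX.
have Hx : x \in VS by move: HX; rewrite inE => /andP[].
by rewrite depth_par //; lia.
Qed.

Lemma X_VS x : x \in X -> x \in VS.
Proof. by rewrite inE => /andP[]. Qed.

Lemma top_par x : x \in X -> par x != vi -> top (par x) = top x.
Proof.
move=> HX Hp; have Hx := X_VS HX.
have Hd1 : (1 < depth x)%N.
  have := depth_pos (x := par x); rewrite !inE Hp par_VS // depth_par //.
  by move=> /(_ isT); lia.
by rewrite -(top_it (i := 1) Hx).
Qed.

Variables (c : {set V} -> rat) (p : V -> rat).
Hypothesis Hc : forall e, e \in E -> 0 < c e.
Hypothesis Hp0 : forall v, 0 <= p v.

Lemma ed_inj_in : {in X &, injective ed}.
Proof. by move=> x y Hx Hy; apply: ed_inj. Qed.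

Lemma cost_X : \sum_(x in X) c (ed x) + \sum_(v in ~: VS) p v <= Cost c p VS ES.
Proof.
rewrite /Cost lerD2r -(big_imset _ ed_inj_in); apply: sum_sub.
  by apply/subsetP => e /imsetP[x Hx ->]; apply: ed_ES.
by move=> e He; apply: ltW; apply: Hc; apply: (subsetP HES).
Qed.

Lemma prune y : y \in X -> par y = vi ->
  (forall VS' ES', is_tree E VS' ES' -> Cost c p VS ES <= Cost c p VS' ES') ->
  exists t, [/\ t \in Tp p, t \in X & top t = y].
Proof.
move=> Hy Hpy Hopt.
case: (boolP [exists t, [&& t \in Tp p, t \in X & top t == y]]) =>
  [/existsP[t /and3P[H1 H2 /eqP H3]]|Hno]; first by exists t.
exfalso.
pose B := [set x in X | top x == y].
pose VS' := VS :\: B.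
pose X' := VS' :\ vi.
pose ES' := ed @: X'.
have hB : forall x, x \in B -> p x = 0.
  move=> x; rewrite inE => /andP[HxX /eqP Htx].
  have : x \notin Tp p by apply: contra Hno => Ht; apply/existsP; exists x; rewrite Ht HxX Htx eqxx.
  by rewrite inE -leNgt => H; apply/eqP; rewrite eq_le H Hp0.
have BX : forall w, w \in B -> w \in X.
  by move=> w; rewrite inE => /andP[].
have X'eq : X' = X :\: B.
  by apply/setP => x; rewrite !inE; case: (x \in VS); case: (x != vi); case: (top x == y).
have X'X : forall x, x \in X' -> x \in X by move=> x; rewrite X'eq inE => /andP[].
have X'VS' : forall x, x \in X' -> x \in VS' by move=> x; rewrite inE => /andP[].
have viVS' : vi \in VS'.
  by rewrite inE Hvi andbT; apply/negP => /BX; rewrite !inE eqxx.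
have par_cl : forall x, x \in X' -> par x \in VS'.
  move=> x Hx; have HxX := X'X _ Hx.
  case: (eqVneq (par x) vi) => [->//|Hpv].
  have HpX : par x \in X by rewrite /X !inE Hpv par_VS // X_VS.
  rewrite inE par_VS ?X_VS // andbT inE HpX /= top_par //.
  by move: Hx; rewrite X'eq !inE; case: (x \in VS); case: (x != vi); case: (top x == y).
have yB : y \in B.
  have Hd : depth y = 1%N.
    have := depth_par (X_VS Hy); rewrite Hpy depth_vi; have := depth_pos Hy; lia.
  by rewrite inE Hy /top Hd eqxx.
have adjE : forall a b, adj ES' a b ->
    (a \in X' /\ b = par a) \/ (b \in X' /\ a = par b).
  move=> a b /imsetP[z Hz Hab]; case: (set2_eq Hab) => [[-> ->]|[-> ->]]; by [left|right].
have Htree : is_tree E VS' ES'.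
  split.
  - by apply/subsetP => e /imsetP[x Hx ->]; apply: (subsetP HES); apply: ed_ES; apply: X'X.
  - move=> e /imsetP[x Hx ->]; apply/subsetP => v /set2P[]->.
      exact: X'VS'.
    exact: par_cl.
  - by apply/set0Pn; exists vi.
  - have conn_vi : forall x, x \in VS' -> connect (adj ES') x vi.
      move=> x; move: {2}(depth x) (leqnn (depth x)) => n; elim: n x => [|n IH] x Hn Hx.
        have Hx' : x \in VS by move: Hx; rewrite inE => /andP[].
        by rewrite (depth0 Hx') //; lia.
      case: (eqVneq x vi) => [->|Hxv]; first exact: connect0.
      have HxX' : x \in X' by apply/setD1P; split.
      apply: connect_trans (connect1 _) (IH _ _ (par_cl _ HxX')).
        by rewrite /adj -/(ed x); apply: imset_f.
      have := depth_par_lt (X'X _ HxX'); lia.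
    have Hsym : connect_sym (adj ES') by apply: sym_connect_sym => a b; apply: adjC_gen.
    move=> u w Hu Hw; apply: connect_trans (conn_vi _ Hu) _.
    by rewrite Hsym; apply: conn_vi.
  - move=> [x [s [Hsz Hu Hpath Hlast]]].
    have Hcyc : cycle (adj ES') (x :: s) by rewrite /= rcons_path Hpath.
    have [z zin Hz] := seq_max depth (mem_head x s).
    case: (rot_to zin) => i s' Hrot.
    have Hc' : cycle (adj ES') (z :: s') by rewrite -Hrot rot_cycle.
    have Hu' : uniq (z :: s') by rewrite -Hrot rot_uniq.
    have Hsz' : (2 <= size s')%N.
      by move: (congr1 size Hrot); rewrite size_rot /= => -[<-].
    have Hmem : forall v, v \in z :: s' -> v \in x :: s by move=> v; rewrite -Hrot mem_rot.
    clear Hrot; case: s' Hc' Hu' Hsz' Hmem => [|a s''] //= Hc' Hu' Hsz' Hmem.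
    case/andP: Hc' => Hza; rewrite rcons_path => /andP[_ Hbz].
    have Hna : a \notin s'' by case/and3P: Hu' => _ ? _.
    have Hbin : last a s'' \in s''.
      by case: s'' Hsz' {Hbz Hna Hmem Hu'} => [|d t] //= _; apply: mem_last.
    have Hab : a != last a s'' by apply/eqP => Eab; move: Hna; rewrite Eab Hbin.
    have Ha : a = par z.
      case: (adjE _ _ Hza) => [[_ //]|[HaX Hza']].
      have Ha1 : a \in z :: a :: s'' by rewrite !inE eqxx orbT.
      have := Hz a (Hmem a Ha1); have := depth_par_lt (X'X _ HaX).
      by rewrite -Hza' => H1 H2; have := leq_ltn_trans H2 H1; rewrite ltnn.
    have Hb : last a s'' = par z.
      case: (adjE _ _ Hbz) => [[HbX Hzb]|[_ //]].
      have Hb1 : last a s'' \in z :: a :: s'' by rewrite !inE Hbin !orbT.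
      have := Hz (last a s'') (Hmem _ Hb1).
      have := depth_par_lt (X'X _ HbX); rewrite -Hzb => H1 H2.
      by have := leq_ltn_trans H2 H1; rewrite ltnn.
    by move: Hab; rewrite Hb Ha eqxx.
have Hlt : Cost c p VS' ES' < Cost c p VS ES.
  apply: lt_le_trans (cost_X).
  have inj' : {in X' &, injective ed} by move=> a b Ha Hb; apply: ed_inj; apply: X'X.
  rewrite /Cost (big_imset _ inj') /=.
  have -> : \sum_(v in ~: VS') p v = \sum_(v in ~: VS) p v.
    rewrite (big_setID B) /= big1 ?add0r; last by move=> v; rewrite inE => /andP[_]; apply: hB.
    by apply: eq_bigl => v; rewrite !inE; case: (v \in VS); case: (v != vi); case: (top v == y).
  rewrite ltrD2r [X in _ < X](big_setID B) /= X'eq ltrDr.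
  have -> : X :&: B = B by apply/setIidPr/subsetP.
  rewrite (bigD1 y) //=; apply: ltr_pwDl.
    by apply: Hc; apply: (subsetP HES); apply: ed_ES.
  by apply: sumr_ge0 => v /andP[vB _]; apply: ltW; apply: Hc; apply: (subsetP HES); apply: ed_ES; apply: BX.
by have := Hopt _ _ Htree; rewrite leNgt Hlt.
Qed.


Variable H : V -> {set V}.
Hypothesis Hreg : forall v t t', t \in Tp p -> t' \in Tp p -> v \in H t -> v \in H t' -> t = t'.
Hypothesis Hself : forall t, t \in Tp p -> t \in H t.
Hypothesis Hterm : forall t x, t \in Tp p -> x \in Tp p -> x \in H t -> x = t.
Hypothesis Hvi_nt : vi \notin Tp p.
Hypothesis Hopt : forall VS' ES', is_tree E VS' ES' -> Cost c p VS ES <= Cost c p VS' ES'.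

Definition m t := find (fun i => it i.+1 t \notin H t) (iota 0 (depth t)).

Lemma m_le t : (m t <= depth t)%N.
Proof. by rewrite /m; apply: leq_trans (find_size _ _) _; rewrite size_iota. Qed.

Lemma m_in t i : t \in Tp p -> (i <= m t)%N -> it i t \in H t.
Proof.
move=> Ht; case: i => [|j] Hj; first exact: Hself.
have Hj' : (j < depth t)%N by apply: leq_trans Hj (m_le t).
have := before_find 0 Hj; rewrite nth_iota // add0n => /negbFE; done.
Qed.

Lemma m_out t : (m t < depth t)%N -> it (m t).+1 t \notin H t.
Proof.
move=> Hm; have Hh : has (fun i => it i.+1 t \notin H t) (iota 0 (depth t)).
  by rewrite has_find size_iota.
by have := nth_find 0 Hh; rewrite -/(m t) nth_iota // add0n.
Qed.

Definition h t := (depth t - m t)%N.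

Definition cand y t := [&& t \in Tp p, t \in X & top t == y].

Definition rep y :=
  if [pick t | cand y t && [forall t', cand y t' ==> (h t <= h t')%N]] is Some t then t else y.

Definition Ch := [set y in X | par y == vi].

Lemma rep_spec y : y \in Ch -> cand y (rep y) /\ forall t', cand y t' -> (h (rep y) <= h t')%N.
Proof.
rewrite inE => /andP[Hy /eqP Hpy].
have [t0 [H1 H2 H3]] := prune Hy Hpy Hopt.
have Ct0 : cand y t0 by rewrite /cand H1 H2 H3 eqxx.
rewrite /rep; case: pickP => [t /andP[Ct /forallP Hm]|Hn].
  by split => // t' Ct'; have := Hm t'; rewrite Ct'.
exfalso; case: (arg_minnP h Ct0) => t Ct Hmin.
have := Hn t; rewrite Ct /=; move/negP; apply; apply/forallP => t'.
by apply/implyP; apply: Hmin.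
Qed.

Definition Rs := rep @: Ch.

Lemma cand_X y t : cand y t -> t \in X.
Proof. by case/and3P. Qed.

Lemma cand_Tp y t : cand y t -> t \in Tp p.
Proof. by case/and3P. Qed.

Lemma Rs_spec u : u \in Rs -> exists2 y, y \in Ch & u = rep y /\ top u = y.
Proof.
move=> /imsetP[y Hy ->]; exists y => //; split => //.
by have [/and3P[_ _ /eqP]] := rep_spec Hy.
Qed.

Lemma top_Ch x : x \in X -> top x \in Ch.
Proof. by move=> Hx; have [H1 H2 _] := top_spec Hx; rewrite inE H1 H2 eqxx. Qed.

Lemma nonrep_m t : t \in Tp p -> t \in X -> t \notin Rs -> (m t < depth t)%N.
Proof.
move=> Ht HX Hn; rewrite ltn_neqAle m_le andbT; apply/negP => /eqP Hm.
have HCh := top_Ch HX.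
have [Cu Hmin] := rep_spec HCh.
have Ct : cand (top t) t by rewrite /cand Ht HX eqxx.
have := Hmin t Ct; rewrite /h Hm subnn leqn0 subn_eq0 => Hmu.
have Hu := cand_Tp Cu; have HuX := cand_X Cu.
have Hv1 : vi \in H (rep (top t)).
  by rewrite -(it_depth (X_VS HuX)); apply: m_in.
have Hv2 : vi \in H t by rewrite -(it_depth (X_VS HX)); apply: m_in => //; rewrite Hm.
have Eut := Hreg Hu Ht Hv1 Hv2.
by move: Hn; rewrite -Eut; move/negP; apply; apply: imset_f.
Qed.

Lemma rep_interior y j : y \in Ch -> (0 < j)%N -> (j < depth (rep y))%N ->
  it j (rep y) \notin Tp p.
Proof.
move=> HCh Hj Hjd; set u := rep y; have [Cu Hmin] := rep_spec HCh.
have HuX := cand_X Cu; have Hu := cand_Tp Cu; have HuV := X_VS HuX.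
apply/negP => Hx.
have HxX : it j u \in X by apply: it_X.
have Cx : cand y (it j u).
  by rewrite /cand Hx HxX top_it //; case/and3P: Cu.
have := Hmin _ Cx.
have Hmu : (m u < j)%N.
  rewrite ltnNge; apply/negP => Hjm.
  have := Hterm Hu Hx (m_in Hu Hjm) => Ej.
  have := @it_inj j 0 u HuV (ltnW Hjd) (leq0n _) Ej; by move=> Ej0; rewrite Ej0 in Hj.
rewrite /h depth_it // => H1.
have : (depth (it j u) - m (it j u) <= depth u - j)%N by rewrite depth_it // leq_subr.
rewrite depth_it //; move=> H2; move: (leq_trans H1 H2) Hmu Hjd; move: (depth u) (m u) => a b; clear; lia.
Qed.

Definition seg t := if t \in Rs then [set it (val i) t | i : 'I_(depth t)]
                    else [set it (val i) t | i : 'I_(m t).+1].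

Lemma seg_X t : t \in Tp p -> t \in X -> seg t \subset X.
Proof.
move=> Ht HX; rewrite /seg; case: ifP => Hr; apply/subsetP => x /imsetP[i _ ->].
  by apply: it_X; [exact: X_VS HX | exact: ltn_ord].
apply: it_X; first exact: X_VS.
by apply: leq_trans (ltn_ord i) _; apply: nonrep_m => //; rewrite Hr.
Qed.

Lemma seg_mem t x : t \in Tp p -> t \in X -> x \in seg t ->
  exists2 i, (i < depth t)%N & x = it i t /\ (t \notin Rs -> (i <= m t)%N).
Proof.
move=> Ht HX; rewrite /seg; case: ifP => Hr /imsetP[i _ ->].
  by exists i => //; split.
exists i; last by split => // _; rewrite -ltnS.
by apply: leq_trans (ltn_ord i) _; apply: nonrep_m => //; rewrite Hr.
Qed.

Lemma seg_disj t t' : t \in Tp p -> t \in X -> t' \in Tp p -> t' \in X -> t != t' ->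
  [disjoint seg t & seg t'].
Proof.
move=> Ht HX Ht' HX' Hne; apply/pred0P => x /=; apply/negP => /andP[H1 H2].
have [i Hi [Ex Hri]] := seg_mem Ht HX H1.
have [j Hj [Ex' Hrj]] := seg_mem Ht' HX' H2.
have Htop : top t = top t' by rewrite -(top_it (X_VS HX) Hi) -Ex Ex' top_it // X_VS.
have key : forall a b i j, a \in Tp p -> a \in X -> b \in Tp p -> b \in X -> a != b ->
    top a = top b -> a \in Rs -> b \notin Rs -> (i < depth a)%N -> (j <= m b)%N ->
    it i a = it j b -> False.
  move=> a b i0 j0 Ha HaX Hb HbX Hab Htab Ra Rb Hi0 Hj0 E0.
  have [y Hy [Ea Ey]] := Rs_spec Ra.
  have [_ Hmin] := rep_spec Hy.
  have Cb : cand y b by rewrite /cand Hb HbX -Ey Htab eqxx.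
  have := Hmin b Cb; rewrite -Ea => Hhab.
  have Hxb : it i0 a \in H b by rewrite E0; apply: m_in.
  have Hma : (m a < i0)%N.
    rewrite ltnNge; apply/negP => Hle.
    have := Hreg Ha Hb (m_in Ha Hle) Hxb => Eab; by rewrite Eab eqxx in Hab.
  have Hd : depth (it i0 a) = depth (it j0 b) by rewrite E0.
  rewrite !depth_it ?X_VS // in Hd.
  have K1 := m_le b; have K2 := ltnW Hi0.
  exact: (arith1 Hhab K1 K2 Hd Hma Hj0).
case: (boolP (t \in Rs)) => Rt; case: (boolP (t' \in Rs)) => Rt'.
- have [y Hy [Ey1 Ey2]] := Rs_spec Rt; have [y' Hy' [Ey1' Ey2']] := Rs_spec Rt'.
  have Eyy : y = y' by rewrite -Ey2 -Ey2' Htop.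
  by move: Hne; rewrite Ey1 Ey1' Eyy eqxx.
- exact: (key t t' i j Ht HX Ht' HX' Hne Htop Rt Rt' Hi (Hrj Rt') (etrans (esym Ex) Ex')).
- by apply: (key t' t j i Ht' HX' Ht HX _ (esym Htop) Rt' Rt Hj (Hri Rt) (etrans (esym Ex') Ex)); rewrite eq_sym.
- have Hx1 : x \in H t by rewrite Ex; apply: m_in => //; apply: Hri.
  have Hx2 : x \in H t' by rewrite Ex'; apply: m_in => //; apply: Hrj.
  by have := Hreg Ht Ht' Hx1 Hx2 => Ett; rewrite Ett eqxx in Hne.
Qed.


Lemma rpc_le t v b : v \notin H t -> ele (dG E c t v) (Some b) -> rpc E c p H t <= b.
Proof.
move=> Hv Hd; rewrite /rpc.
have := ele_trans (big_emin_le (fun w => dG E c t w) (P := fun w => w \notin H t) Hv) Hd.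
case: (\big[emin/None]_(w | w \notin H t) dG E c t w) => //= z Hz.
by apply: le_trans Hz; rewrite ge_min lexx orbT.
Qed.

Lemma rpc_le_p t : rpc E c p H t <= p t.
Proof.
by rewrite /rpc; case: (\big[emin/None]_(w | w \notin H t) dG E c t w) => [z|] /=; rewrite ?ge_min lexx.
Qed.

Lemma adj_E_ed x : x \in X -> adj E x (par x) /\ adj E (par x) x.
Proof.
move=> Hx; have HE := subsetP HES _ (ed_ES Hx).
by rewrite /adj -/(ed x) HE setUC -/(ed x) HE.
Qed.

Lemma run_sum t : t \in Tp p -> t \in X -> (m t < depth t)%N ->
  rpc E c p H t <= \sum_(i < (m t).+1) c (ed (it i t)).
Proof.
move=> Ht HX Hm; have HV := X_VS HX.
set k := (m t).+1; pose w i := it i t.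
have Hkd : (k <= depth t)%N by [].
have Hp : is_path E [set: V] t [seq w i | i <- iota 1 k] (w k).
  apply/and5P; split.
  - by rewrite inE.
  - by apply/allP => x; rewrite inE.
  - change (path (adj E) (w 0%N) [seq w i | i <- iota 1 k]); apply: path_fun => i Hi.
    by rewrite add0n; case: (adj_E_ed (it_X HV (leq_trans Hi Hkd))).
  - by change (last (w 0%N) [seq w i | i <- iota 1 k] == w k); rewrite last_fun.
  - change (uniq [seq w i | i <- iota 0 k.+1]); rewrite map_inj_in_uniq ?iota_uniq //.
    move=> i j; rewrite !mem_iota !add0n /= => Hi Hj; apply: it_inj => //.
      by apply: leq_trans Hkd; rewrite -ltnS.
    by apply: leq_trans Hkd; rewrite -ltnS.
have Hsz : (size [seq w i | i <- iota 1 k] < #|V|)%N.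
  by rewrite size_map size_iota; apply: leq_ltn_trans Hkd _; case: (depth_spec HV).
have := dist_le c Hp Hsz; rewrite -/(dG E c t (w k)).
change (wcost c t _) with (wcost c (w 0%N) [seq w i | i <- iota 1 k]); rewrite wcost_fun.
move=> Hd; apply: (rpc_le (m_out Hm)); apply: ele_trans Hd _ => /=.
by rewrite le_eqVlt; apply/orP; left; apply/eqP; apply: eq_bigr => i _; rewrite add0n.
Qed.

Lemma rep_dlow u : u \in Rs -> ele (dlow E c p vi u) (Some (\sum_(i < depth u) c (ed (it i u)))).
Proof.
move=> Hr; have [y Hy [Eu Ey]] := Rs_spec Hr.
have [Cu _] := rep_spec Hy; rewrite -Eu in Cu.
have HX := cand_X Cu; have HV := X_VS HX.
set d := depth u; pose w i := it (d - i) u.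
have w0 : w 0%N = vi by rewrite /w subn0 it_depth.
have wd : w d = u by rewrite /w subnn.
have wS : forall i, (i < d)%N -> w i = par (w i.+1).
  by move=> i Hi; rewrite /w -itS subnSK.
have wX : forall i, (i < d)%N -> w i.+1 \in X.
  by move=> i Hi; apply: it_X => //; rewrite -/d; lia.
have Hp : is_path E [set x | (x \notin Tp p) || (x == vi) || (x == u)] vi
             [seq w i | i <- iota 1 d] u.
  apply/and5P; split.
  - by rewrite inE eqxx orbT.
  - apply/allP => x /mapP[i]; rewrite mem_iota add1n => /andP[Hi1 Hi2] ->.
    rewrite inE; case: (eqVneq i d) => [->|Hid]; first by rewrite wd eqxx !orbT.
    rewrite /w Eu rep_interior // -?Eu; lia.
  - rewrite -w0; apply: path_fun => i Hi; rewrite add0n wS //.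
    by case: (adj_E_ed (wX _ Hi)).
  - by rewrite -w0 last_fun add0n wd.
  - rewrite -w0; change (uniq [seq w i | i <- iota 0 d.+1]); rewrite map_inj_in_uniq ?iota_uniq //.
    move=> i j; rewrite !mem_iota !add0n /= => Hi Hj /it_inj.
    rewrite -/d => Hij; have := Hij HV (leq_subr _ _) (leq_subr _ _); lia.
have Hsz : (size [seq w i | i <- iota 1 d] < #|V|)%N.
  by rewrite size_map size_iota; case: (depth_spec HV).
have := dist_le c Hp Hsz; rewrite -w0 wcost_fun => Hd.
apply: ele_trans Hd _ => /=.
rewrite le_eqVlt; apply/orP; left; apply/eqP.
rewrite (reindex_inj rev_ord_inj) /=; apply: eq_bigr => i _.
rewrite add0n wS; last exact: arith3.
by rewrite setUC /w arith2.
Qed.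


Lemma seg_rep_sum u : u \in Rs -> u \in X ->
  \sum_(x in seg u) c (ed x) = \sum_(i < depth u) c (ed (it i u)).
Proof.
move=> Hr HX; rewrite /seg Hr big_imset //= => i j _ _ Eij.
by apply: val_inj; apply: it_inj Eij => //; [exact: X_VS HX | apply: ltnW | apply: ltnW].
Qed.

Lemma seg_nonrep_sum t : t \in Tp p -> t \in X -> t \notin Rs ->
  \sum_(x in seg t) c (ed x) = \sum_(i < (m t).+1) c (ed (it i t)).
Proof.
move=> Ht HX Hr; rewrite /seg (negbTE Hr) big_imset //= => i j _ _ Eij.
have Hm := nonrep_m Ht HX Hr.
have Hk : forall k : 'I_(m t).+1, (val k <= depth t)%N.
  by move=> k; apply: ltnW; apply: leq_trans (ltn_ord k) Hm.
by apply: val_inj; apply: it_inj Eij; [exact: X_VS HX | exact: Hk | exact: Hk].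
Qed.

Lemma ced_ge0 t i : t \in X -> (i < depth t)%N -> 0 <= c (ed (it i t)).
Proof.
move=> HX Hi; apply: ltW; apply: Hc; apply: (subsetP HES); apply: ed_ES.
by apply: it_X => //; exact: X_VS.
Qed.

Variable t0 : V.
Hypothesis Ht0 : t0 \in Tp p.
Hypothesis Hvt0 : vi \in H t0.
Hypothesis Hdeg : (3 <= deg ES vi)%N.

Lemma TpX t : t \in Tp p -> t \in VS -> t \in X.
Proof. by move=> Ht HtV; rewrite /X in_setD1 HtV andbT; apply: contraNneq Hvi_nt => <-. Qed.

Lemma Rs_card : (3 <= #|Rs|)%N.
Proof.
have inj : {in Ch &, injective rep}.
  move=> y y' Hy Hy' E1.
  have [Cy _] := rep_spec Hy; have [Cy' _] := rep_spec Hy'.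
  case/and3P: Cy => _ _ /eqP <-; case/and3P: Cy' => _ _ /eqP <-; by rewrite E1.
rewrite /Rs card_in_imset //; apply: leq_trans Hdeg _; rewrite /deg.
apply: leq_trans (leq_imset_card ed Ch); apply: subset_leq_card.
apply/subsetP => e; rewrite inE => /andP[He Hve].
have /cards2P[a [b [Hab Eab]]] : #|e| == 2%N by rewrite HE2 // (subsetP HES).
have : exists w, e = [set vi; w].
  move: Hve; rewrite Eab => /set2P[] ->; first by exists b.
  by exists a; rewrite setUC.
move=> [w Ew]; have Hadj : adj ES vi w by rewrite /adj -Ew.
have /andP[_ HwV] := adj_VS Hadj.
have Hwv : w != vi by rewrite eq_sym; apply: adj_neq.
have HwX : w \in X by rewrite /X !inE Hwv.
have Hd1 := depth_adj Hadj; rewrite depth_vi in Hd1.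
have Hd0 := depth_pos HwX.
have Hpw : par w = vi.
  apply: depth0; first exact: par_VS.
  by rewrite depth_par //; move: Hd1 Hd0; case: (depth w) => [|[|]].
apply/imsetP; exists w; first by rewrite inE HwX Hpw eqxx.
by rewrite Ew /ed Hpw setUC.
Qed.

Lemma main_bound : exists R3 : {set V},
  [/\ R3 \subset Tp p, #|R3| = 3%N,
      (forall t, t \in R3 -> ele (dlow E c p vi t) (Some (\sum_(i < depth t) c (ed (it i t))))) &
      \sum_(t in R3) \sum_(i < depth t) c (ed (it i t)) + \sum_(t in Tp p :\: R3) rpc E c p H t
        <= Cost c p VS ES].
Proof.
have RsTp : forall t, t \in Rs -> (t \in Tp p) && (t \in X).
  by move=> t /imsetP[y Hy ->]; have [/and3P[-> -> _] _] := rep_spec Hy.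
have [R3 [R3Rs R3c R3t0]] : exists R3 : {set V},
    [/\ R3 \subset Rs, #|R3| = 3%N & t0 \in Rs -> t0 \in R3].
  case: (boolP (t0 \in Rs)) => Ht0R.
    have : (2 <= #|Rs :\ t0|)%N by have := Rs_card; rewrite (cardsD1 t0) Ht0R.
    move=> /sub_card[B [HB HBc]]; exists (t0 |: B); split => //.
    - by apply/subsetP => x /setU1P[->//|/(subsetP HB)]; rewrite in_setD1 => /andP[].
    - rewrite cardsU1 HBc; have -> // : t0 \notin B.
      by apply/negP => /(subsetP HB); rewrite in_setD1 eqxx.
    - by rewrite setU11.
  have [B [HB HBc]] := sub_card Rs_card; by exists B.
pose f t := \sum_(i < depth t) c (ed (it i t)).
pose g t := if t \in R3 then f t else rpc E c p H t.
exists R3; split => //.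
- by apply/subsetP => t /(subsetP R3Rs) /RsTp /andP[].
- by move=> t /(subsetP R3Rs) Hr; apply: rep_dlow.
have Hsplit : \sum_(t in R3) f t + \sum_(t in Tp p :\: R3) rpc E c p H t = \sum_(t in Tp p) g t.
  rewrite [RHS](big_setID R3) /=.
  have -> : Tp p :&: R3 = R3 by apply/setIidPr/subsetP => t /(subsetP R3Rs) /RsTp /andP[].
  congr (_ + _); apply: eq_bigr => t; rewrite /g ?inE.
    by move=> ->.
  by case/andP => /negbTE ->.
rewrite Hsplit; apply: le_trans (cost_X).
rewrite (big_setID VS) /=; apply: lerD; last first.
  apply: le_trans (sum_sub (A := Tp p :\: VS) _ _); last first.
  - by move=> v _; apply: Hp0.
  - by apply/subsetP => v; rewrite !inE => /andP[].
  apply: ler_sum => t; rewrite inE => /andP[HtV _]; rewrite /g.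
  have -> : (t \in R3) = false.
    apply/negP => /(subsetP R3Rs) /RsTp /andP[_ /X_VS]; by rewrite (negbTE HtV).
  exact: rpc_le_p.
pose F t := if t \in Tp p :&: VS then seg t else set0.
have Fdisj : forall t t', t != t' -> [disjoint F t & F t'].
  move=> t t' Htt; rewrite /F; case: ifP => Ht; last by rewrite -setI_eq0 set0I.
  case: ifP => Ht'; last by rewrite -setI_eq0 setI0.
  move: Ht Ht'; rewrite !in_setI => /andP[Ht HtV] /andP[Ht' HtV'].
  by apply: seg_disj => //; apply: TpX.
have FX : \bigcup_t F t \subset X.
  apply/bigcupsP => t _; rewrite /F; case: ifP => [|_]; last exact: sub0set.
  rewrite in_setI => /andP[Ht HtV]; apply: seg_X => //; exact: TpX.
apply: le_trans (sum_sub FX _); last first.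
  by move=> x Hx; apply: ltW; apply: Hc; apply: (subsetP HES); apply: ed_ES.
rewrite partition_disjoint_bigcup //.
rewrite [X in _ <= X](bigID (fun t => t \in Tp p :&: VS)) /=.
rewrite [X in _ <= _ + X]big1 ?addr0; last by move=> t /negbTE Ht; rewrite /F Ht big_set0.
apply: ler_sum => t HtTV.
rewrite /F HtTV; move: HtTV; rewrite in_setI => /andP[Ht HtV].
have HX : t \in X by exact: TpX.
rewrite /g; case: (boolP (t \in R3)) => HR3.
  by rewrite seg_rep_sum ?(subsetP R3Rs) // lexx.
case: (boolP (t \in Rs)) => HRs; last first.
  by rewrite seg_nonrep_sum //; apply: run_sum => //; apply: nonrep_m.
have Hvt : vi \notin H t.
  apply/negP => Hv; have Et := Hreg Ht0 Ht Hvt0 Hv.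
  by move: HR3; rewrite -Et R3t0 // Et.
have Hm : (m t < depth t)%N.
  rewrite ltn_neqAle m_le andbT; apply/negP => /eqP Hm.
  by move: Hvt; rewrite -(it_depth (X_VS HX)); rewrite m_in // Hm.
rewrite seg_rep_sum //; apply: le_trans (run_sum Ht HX Hm) _.
rewrite (big_ord_widen (depth t) (fun i => c (ed (it i t))) Hm).
rewrite [X in X <= _]big_mkcond /=; apply: ler_sum => i _.
by case: ifP => _; [rewrite lexx | apply: ced_ge0].
Qed.

End Tree.

Lemma final_arith (V : finType) (dl : V -> option rat) (r : V -> rat) (T : {set V})
  (ts bs : seq V) (R3 : {set V}) (f : V -> rat) (Cst : rat) (v0 : V) :
  enumerates T ts -> sorted (fun x y => r x <= r y) ts ->
  enumerates T bs -> sorted (fun x y => ele (dl x) (dl y)) bs ->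
  (forall x, onn (dl x)) ->
  R3 \subset T -> #|R3| = 3%N -> (forall t, t \in R3 -> ele (dl t) (Some (f t))) ->
  \sum_(t in R3) f t + \sum_(t in T :\: R3) r t <= Cst ->
  ele (eadd (eadd (eadd (dl (nth v0 bs 0)) (dl (nth v0 bs 1))) (dl (nth v0 bs 2)))
            (Some (\sum_(t <- take (#|T| - 3) ts) r t))) (Some Cst).
Proof.
move=> [Hut Hts] Hsts [Hub Hbs] Hsbs Hnn HR3 HR3c Hf Hsum.
have HA : \sum_(t <- take (#|T| - 3) ts) r t <= \sum_(t in T :\: R3) r t.
  have Hsz : size (enum (T :\: R3)) = (#|T| - 3)%N.
    by rewrite -cardE cardsD (setIidPr HR3) HR3c.
  rewrite -Hsz -big_enum; apply: sorted_take_le => //; first exact: enum_uniq.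
  by move=> x; rewrite mem_enum Hts => /setDP[].
pose Cb := 1 + \sum_(x : V) odflt 0 (dl x) + \sum_(t in R3) f t.
pose g x := if dl x is Some a then a else Cb.
have Hsum0 : 0 <= \sum_(x : V) odflt 0 (dl x).
  by apply: sumr_ge0 => x _; have := Hnn x; case: (dl x).
have HR3f0 : 0 <= \sum_(t in R3) f t.
  apply: sumr_ge0 => t Ht; have := Hf t Ht; have := Hnn t.
  by case: (dl t) => //= a Ha Hb; apply: le_trans Hb.
have Hle_Cb : forall x a, dl x = Some a -> a < Cb.
  move=> x a Hx.
  have : a <= \sum_(x : V) odflt 0 (dl x).
    rewrite (bigD1 x) //= Hx; apply: ler_wpDr => //.
    apply: sumr_ge0 => y _; have := Hnn y; by case: (dl y).
  rewrite /Cb; move: HR3f0; lra.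
have Hg0 : forall x, 0 <= g x.
  move=> x; rewrite /g; have := Hnn x; case E1 : (dl x) => //= _.
  rewrite /Cb; move: HR3f0 Hsum0; lra.
have Hsg : sorted (fun x y => g x <= g y) bs.
  apply: sub_sorted Hsbs => x y; rewrite /g.
  case E1 : (dl x) => [a|]; case E2 : (dl y) => [b|] //= _.
  by apply: ltW; apply: Hle_Cb E1.
have HB : \sum_(x <- take 3 bs) g x <= \sum_(t in R3) f t.
  have Hsz : size (enum R3) = 3%N by rewrite -cardE.
  rewrite -{1}Hsz; apply: le_trans (sorted_take_le Hsg (enum_uniq _) _) _.
    by move=> x; rewrite mem_enum Hbs => /(subsetP HR3).
  rewrite big_enum /=; apply: ler_sum => t Ht; rewrite /g.
  by have := Hf t Ht; case: (dl t) => //= a.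
have Hszb : (3 <= size bs)%N.
  by rewrite -(card_uniqP Hub) (eq_card Hbs) -HR3c subset_leq_card.
have HCb : \sum_(t in R3) f t < Cb by rewrite /Cb; move: Hsum0; lra.
case: bs Hub Hbs Hsbs Hsg HB Hszb => [|b0 [|b1 [|b2 bs']]] //= _ _ _ _ HB _.
rewrite /= !big_cons take0 big_nil addr0 in HB.
have G0 := Hg0 b0; have G1 := Hg0 b1; have G2 := Hg0 b2.
move: HB G0 G1 G2; rewrite /g.
case: (dl b0) => [a0|]; last by move: HCb; lra.
case: (dl b1) => [a1|]; last by move: HCb; lra.
case: (dl b2) => [a2|]; last by move: HCb; lra.
move=> /= HB _ _ _; move: HA Hsum; lra.
Qed.


End Helpers.
Import Helpers.

Theorem proposition3 (V : finType) (E : {set {set V}}) (c : {set V} -> rat) (p : V -> rat)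
  (Hinst : is_pcstp E c p)
  (Hs : (3 <= #|Tp p|)%N)
  (H : V -> {set V}) (HH : is_trd E p H)
  (ts : seq V) (Hts : enumerates (Tp p) ts)
  (Hts_sorted : sorted (fun x y => rpc E c p H x <= rpc E c p H y) ts)
  (vi : V) (Hvi : vi \notin Tp p)
  (bs : seq V) (Hbs : enumerates (Tp p) bs)
  (Hbs_sorted : sorted (fun x y => ele (dlow E c p vi x) (dlow E c p vi y)) bs)
  (VS : {set V}) (ES : {set {set V}}) (Hopt : optimal E c p VS ES)
  (Hdeg : (3 <= deg ES vi)%N) :
  ele (eadd (eadd (eadd (dlow E c p vi (nth vi bs 0)) (dlow E c p vi (nth vi bs 1)))
                  (dlow E c p vi (nth vi bs 2)))
            (Some (\sum_(t <- take (#|Tp p| - 3) ts) rpc E c p H t)))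
      (Some (Cost c p VS ES)).
Proof.
case: Hinst => HE2 Hc Hp0 _.
case: Hopt => [[HES HESV HVS0 Hconn _] Hmin].
case: HH => Hpart Hint _.
have HviVS : vi \in VS.
  have : (0 < deg ES vi)%N by apply: leq_trans Hdeg.
  rewrite /deg => /card_gt0P[e]; rewrite inE => /andP[He Hve].
  exact: (subsetP (HESV e He)).
have Hreg : forall v t t', t \in Tp p -> t' \in Tp p -> v \in H t -> v \in H t' -> t = t'.
  move=> v t t' Ht Ht' Hv Hv'; have [t1 [_ _ U]] := Hpart v.
  by rewrite (U t Ht Hv) (U t' Ht' Hv').
have Hself : forall t, t \in Tp p -> t \in H t.
  move=> t Ht; have := set11 t; rewrite -(Hint t Ht) => /setIP[]; done.
have Hterm : forall t x, t \in Tp p -> x \in Tp p -> x \in H t -> x = t.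
  move=> t x Ht Hx Hxt; have : x \in H t :&: Tp p by rewrite inE Hxt Hx.
  by rewrite (Hint t Ht) => /set1P.
have [t0 [Ht0 Hvt0 _]] := Hpart vi.
have [R3 [HR3 HR3c Hf Hsum]] :=
  main_bound HE2 HES HESV Hconn HviVS Hc Hp0 Hreg Hself Hterm Hvi Hmin Ht0 Hvt0 Hdeg.
apply: final_arith Hts Hts_sorted Hbs Hbs_sorted _ HR3 HR3c Hf Hsum.
by move=> x; apply: dist_ge0.
Qed.
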